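(* For $p\in[0,1]$ let $M_7(p)$ be the $7\times 7$ row-stochastic matrix $$M_7(p)=\mathbb{I}_5\oplus\begin{pmatrix}p&1-p\\ \tfrac p3&1-\tfrac p3\end{pmatrix},$$ i.e. $[M_7(p)]_{ij}=\delta_{ij}$ for $i,j\le 5$, $[M_7(p)]_{66}=p$, $[M_7(p)]_{67}=1-p$, $[M_7(p)]_{76}=p/3$, $[M_7(p)]_{77}=1-p/3$, and all other entries $0$. Then $\operatorname{rank}_{\mathrm{psd}}(M_7(p))=7$ for every $p\in(0,1]$.
   Context: The psd rank of a nonnegative $n\times m$ matrix $M$, $\operatorname{rank}_{\mathrm{psd}}(M)$, is the smallest $r$ such that there exist $r\times r$ positive semidefinite matrices $R_1,\dots,R_n$ and $C_1,\dots,C_m$ with $M_{ij}=\operatorname{Tr}(R_iC_j)$ for all $i,j$. *)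

(* Defs.v *)
From HB Require Import structures.
From mathcomp Require Import all_boot all_order all_algebra.
From mathcomp Require Import reals.
Set Implicit Arguments. Unset Strict Implicit. Unset Printing Implicit Defensive.
Import Order.TTheory GRing.Theory Num.Theory.
Local Open Scope ring_scope.

Definition psd (R : realType) (r : nat) (A : 'M[R]_r) : Prop :=
  A^T = A /\ forall x : 'cV[R]_r, 0 <= (x^T *m A *m x) 0 0.

Definition has_psd_factorization (R : realType) (n m : nat) (M : 'M[R]_(n, m))
  (r : nat) : Prop :=
  exists (Rs : 'I_n -> 'M[R]_r) (Cs : 'I_m -> 'M[R]_r),
    (forall i, psd (Rs i)) /\ (forall j, psd (Cs j)) /\
    (forall i j, M i j = \tr (Rs i *m Cs j)).

Definition psd_rank (R : realType) (n m : nat) (M : 'M[R]_(n, m)) (r : nat)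
  : Prop :=
  has_psd_factorization M r /\
  forall r', has_psd_factorization M r' -> (r <= r')%N.

(* M_7(p) = I_5 (+) [[p, 1-p], [p/3, 1-p/3]] (0-based indices 5,6) *)
Definition M7 (R : realType) (p : R) : 'M[R]_7 :=
  \matrix_(i < 7, j < 7)
    if ((i < 5)%N && (i == j :> nat)) then 1
    else if ((i == 5 :> nat) && (j == 5 :> nat)) then p
    else if ((i == 5 :> nat) && (j == 6 :> nat)) then 1 - p
    else if ((i == 6 :> nat) && (j == 5 :> nat)) then p / 3
    else if ((i == 6 :> nat) && (j == 6 :> nat)) then 1 - p / 3
    else 0.

(* Main.v *)
Require Import Defs.
From HB Require Import structures.
From mathcomp Require Import all_boot all_order all_algebra.
From mathcomp Require Import reals.
From mathcomp Require Import ring lra zify.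
From Stdlib Require Import Classical.
Import Order.TTheory GRing.Theory Num.Theory.
Local Open Scope ring_scope.
Set Implicit Arguments. Unset Strict Implicit. Unset Printing Implicit Defensive.

Section PSD.
Variable (R : realType) (r : nat).
Implicit Types (A B : 'M[R]_r) (x y : 'cV[R]_r).

Definition bl x B y := (x^T *m B *m y) 0 0.

Lemma bl_sym A x y : A^T = A -> bl x A y = bl y A x.
Proof.
move=> hA; rewrite /bl; transitivity ((x^T *m A *m y)^T 0 0); first by rewrite [RHS]mxE.
by rewrite !trmx_mul trmxK hA mulmxA.
Qed.

Lemma blDl A x y z : bl (x + y) A z = bl x A z + bl y A z.
Proof. by rewrite /bl linearD /= !mulmxDl mxE. Qed.
Lemma blDr A x y z : bl x A (y + z) = bl x A y + bl x A z.
Proof. by rewrite /bl mulmxDr mxE. Qed.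
Lemma blZl A a x z : bl (a *: x) A z = a * bl x A z.
Proof. by rewrite /bl linearZ /= -!scalemxAl mxE. Qed.
Lemma blZr A a x z : bl x A (a *: z) = a * bl x A z.
Proof. by rewrite /bl -scalemxAr mxE. Qed.

Lemma bl_comb A a b x y : A^T = A ->
  bl (a *: x + b *: y) A (a *: x + b *: y) =
  a^+2 * bl x A x + 2 * a * b * bl x A y + b^+2 * bl y A y.
Proof.
move=> hA; rewrite !blDl !blDr !blZl !blZr (bl_sym _ y hA); ring.
Qed.

Lemma bl_trace A x : \tr (A *m (x *m x^T)) = bl x A x.
Proof.
by rewrite mulmxA mxtrace_mulC /bl mulmxA /mxtrace big_ord1.
Qed.

Lemma psd_null A x : psd A -> bl x A x = 0 -> A *m x = 0.
Proof.
move=> [hs hq] h0.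
set y := A *m x.
have hyx : bl y A x = (y^T *m y) 0 0.
  by rewrite /bl /y trmx_mul hs -!mulmxA.
have hxy : bl x A y = (y^T *m y) 0 0 by rewrite bl_sym.
set s := (y^T *m y) 0 0.
have sE : s = \sum_i (y i 0)^+2.
  by rewrite /s mxE; apply: eq_bigr => i _; rewrite mxE expr2.
have s0 : 0 <= s by rewrite sE sumr_ge0 // => i _; rewrite sqr_ge0.
have qy : 0 <= bl y A y := hq y.
have : 0 <= bl (1 *: x + (- (s / (bl y A y + 1))) *: y) A (1 *: x + (- (s / (bl y A y + 1))) *: y) := hq _.
rewrite bl_comb // h0 hxy.
set q := bl y A y => hc.
have hq0 : 0 <= q by [].
have s_eq0 : s = 0.
  apply/eqP; rewrite eq_le s0 andbT; apply: contraTT hc; rewrite -ltNge => sp.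
  rewrite -ltNge.
  have hq1 : 0 < q + 1 by lra.
  rewrite expr1n mulr0 add0r ?mul1r ?mulr1.
  have -> : 2 * - (s / (q + 1)) * s + (- (s / (q + 1))) ^+ 2 * q
          = (s^+2 / (q + 1)^+2) * (- q - 2) .
    by field; rewrite gt_eqF.
  rewrite pmulr_rlt0; first lra.
  by apply: divr_gt0; apply: exprn_gt0.
apply/matrixP => i j; rewrite (ord1 j) [RHS]mxE.
have := psumr_eq0P (P := xpredT) (fun i _ => sqr_ge0 (y i 0)).
move=> /(_ _ i isT); rewrite -sE s_eq0 => /(_ erefl) /eqP.
by rewrite sqrf_eq0 => /eqP.
Qed.

Lemma bl_delta B k l : bl (delta_mx k 0) B (delta_mx l 0) = B k l.
Proof.
rewrite /bl trmx_delta -mulmxA mxE (bigD1 k) //= big1 => [|i /negbTE ik].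
  rewrite [delta_mx _ _ _ _]mxE !eqxx /= mul1r addr0 mxE (bigD1 l) //= big1 => [|i /negbTE il].
    by rewrite [delta_mx _ _ _ _]mxE !eqxx /= mulr1 addr0.
  by rewrite [delta_mx _ _ _ _]mxE il /= ?andbF mulr0.
by rewrite [delta_mx _ _ _ _]mxE ik /= mul0r.
Qed.

Lemma mul1x1 m (P : 'M[R]_(1,1)) (Q : 'M[R]_(1,m)) k : (P *m Q) 0 k = P 0 0 * Q 0 k.
Proof. by rewrite mxE big_ord1. Qed.

Lemma blM x B : (x^T *m B *m x) 0 0 = bl x B x.
Proof. by []. Qed.

Lemma psd_tr A B : psd A -> psd B ->
  0 <= \tr (A *m B) /\ (\tr (A *m B) = 0 -> A *m B = 0).
Proof.
move=> pA.
have [n] := ubnP #|[set j | B j j != 0]|; elim: n B => // n IH B hcnt pB.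
case: (set_0Vmem [set j | B j j != 0]) => [h0 | [j hj]].
  have -> : B = 0.
    apply/matrixP => i k; rewrite [RHS]mxE.
    have hk : bl (delta_mx k 0) B (delta_mx k 0) = 0.
      rewrite bl_delta; apply/eqP; apply: contraT => hk.
      by have := in_set0 k; rewrite -h0 inE hk.
    have := psd_null pB hk => /matrixP/(_ i 0).
    rewrite [RHS]mxE mxE (bigD1 k) //= big1 => [|l /negbTE lk].
      by rewrite !mxE !eqxx mulr1 addr0.
    by rewrite !mxE lk mulr0.
  by rewrite mulmx0 linear0; split => //.
have pA' := pA; case: pA' => sA qA.
have pB' := pB; case: pB' => sB qB.
pose e : 'cV[R]_r := delta_mx j 0.
set c := B j j.
have c0 : 0 < c.
  rewrite lt0r; rewrite inE in hj; rewrite hj /=.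
  by have := qB e; rewrite blM bl_delta.
set w := B *m e.
set B' := B - c^-1 *: (w *m w^T).
have wTx x : (w^T *m x) 0 0 = bl x B e.
  by rewrite bl_sym // /bl /w trmx_mul sB.
have xTw x : (x^T *m w) 0 0 = bl x B e by rewrite /w /bl mulmxA.
have blB' x : bl x B' x = bl x B x - c^-1 * (bl x B e)^+2.
  rewrite /B' /bl mulmxBr mulmxBl mxE [in X in _ + X]mxE; congr (_ - _).
  rewrite -scalemxAr -scalemxAl mxE; congr (_ * _).
  by rewrite !mulmxA -(mulmxA (x^T *m B *m e)) mul1x1 wTx /bl expr2.
have pB'' : psd B'.
  split.
    by rewrite /B' linearD linearN linearZ /= trmx_mul trmxK sB.
  move=> x; rewrite blM blB'.
  set b := bl x B e.
  have h : 0 <= bl (c *: x + (- b) *: e) B (c *: x + (- b) *: e) := qB _.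
  rewrite bl_comb // [bl e B e]bl_delta -/c in h.
  have h2 : 0 <= c * (c * bl x B x - b ^+ 2).
    by have -> : c * (c * bl x B x - b ^+ 2) = c ^+ 2 * bl x B x + 2 * c * - b * b + (- b) ^+ 2 * c by ring.
  have h3 : 0 <= c * bl x B x - b ^+ 2 by rewrite -(pmulr_rge0 _ c0).
  have -> : bl x B x - c^-1 * b ^+ 2 = c^-1 * (c * bl x B x - b ^+ 2).
    by field; rewrite gt_eqF.
  by rewrite mulr_ge0 // invr_ge0 ltW.
have diagB' k : B' k k = B k k - c^-1 * (B k j)^+2.
  by have := blB' (delta_mx k 0); rewrite /e !bl_delta.
have hsub : [set k | B' k k != 0] \subset [set k | B k k != 0] :\ j.
  apply/subsetP => k; rewrite !inE => hk.
  apply/andP; split.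
    apply: contraNneq hk => ->; rewrite diagB' -/c expr2; apply/eqP; field.
    by rewrite gt_eqF.
  apply: contraNneq hk => hBk.
  have ge : 0 <= B' k k by have := (proj2 pB'') (delta_mx k 0); rewrite blM bl_delta.
  have le : B' k k <= 0.
    rewrite diagB' hBk sub0r oppr_le0 mulr_ge0 // ?sqr_ge0 // invr_ge0 ltW //.
  by rewrite eq_le le ge.
have hcnt' : (#|[set k | B' k k != 0%R]| < n)%N.
  have := subset_leq_card hsub; have := cardsD1 j [set k | B k k != 0 :> R].
  rewrite hj /=; move: hcnt; rewrite ltnS => h1 h2 h3.
  by apply: (leq_ltn_trans h3); move: h1; rewrite h2 add1n.
have [IH1 IH2] := IH B' hcnt' pB''.
have BE : B = B' + c^-1 *: (w *m w^T) by rewrite /B' subrK.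
have trE : \tr (A *m B) = \tr (A *m B') + c^-1 * bl w A w.
  by rewrite [in LHS]BE mulmxDr mxtraceD -scalemxAr mxtraceZ bl_trace.
have qw : 0 <= bl w A w := qA w.
have cw : 0 <= c^-1 * bl w A w by rewrite mulr_ge0 // invr_ge0 ltW.
split; first by rewrite trE addr_ge0.
move=> h0; rewrite trE in h0.
have t0 : \tr (A *m B') = 0 by apply/eqP; rewrite eq_le IH1 andbT; lra.
have w0 : bl w A w = 0.
  have : c^-1 * bl w A w = 0 by lra.
  by move/eqP; rewrite mulf_eq0 invr_eq0 gt_eqF //= => /eqP.
by rewrite BE mulmxDr IH2 // -scalemxAr mulmxA psd_null // mul0mx scaler0 addr0.
Qed.
End PSD.

Definition i5 : 'I_7 := @Ordinal 7 5 isT.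
Definition i6 : 'I_7 := @Ordinal 7 6 isT.

Section Main.
Variables (R : realType) (p : R).
Hypotheses (p0 : 0 < p) (p1 : p <= 1).

Lemma M7_55 : M7 p i5 i5 = p. Proof. by rewrite mxE. Qed.
Lemma M7_56 : M7 p i5 i6 = 1 - p. Proof. by rewrite mxE. Qed.
Lemma M7_65 : M7 p i6 i5 = p / 3. Proof. by rewrite mxE. Qed.
Lemma M7_66 : M7 p i6 i6 = 1 - p / 3. Proof. by rewrite mxE. Qed.

Lemma M7_off (u v : 'I_7) : ((u < 5) || (v < 5))%N -> u != v -> M7 p u v = 0.
Proof.
case: u => [[|[|[|[|[|[|[|u]]]]]]] hu] //; case: v => [[|[|[|[|[|[|[|v]]]]]]] hv] //=;
  by rewrite mxE.
Qed.

Lemma M7_diag k : M7 p k k != 0.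
Proof.
have h1 : p != 0 by rewrite gt_eqF.
have h2' : 0 < 1 - p / 3 by have := p0; have := p1; lra.
have h2 : 1 - p / 3 != 0 by rewrite gt_eqF.
by case: k => [[|[|[|[|[|[|[|u]]]]]]] hu] //=; rewrite mxE /= ?oner_eq0.
Qed.

Lemma M7_ge0 i j : 0 <= M7 p i j.
Proof.
have hp0 := p0; have hp1 := p1.
have h1 : 0 <= 1 - p / 3 by lra.
have h2 : 0 <= p / 3 by lra.
have h3 : 0 <= 1 - p by lra.
rewrite mxE; repeat case: ifP => _.
all: by rewrite // ltW.
Qed.


Lemma psd_diag r (d : 'rV[R]_r) : (forall k, 0 <= d 0 k) -> psd (diag_mx d).
Proof.
move=> hd; split; first by rewrite tr_diag_mx.
move=> x; rewrite mul_mx_diag mxE sumr_ge0 // => k _; rewrite !mxE.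
have -> : x k 0 * d 0 k * x k 0 = d 0 k * (x k 0 ^+ 2) by ring.
by rewrite mulr_ge0 // sqr_ge0.
Qed.

Lemma upper : has_psd_factorization (M7 p) 7.
Proof.
exists (fun i => diag_mx (row i (M7 p))), (fun j => diag_mx (delta_mx 0 j)).
split; [|split].
- by move=> i; apply: psd_diag => k; rewrite mxE M7_ge0.
- by move=> j; apply: psd_diag => k; rewrite mxE; case: (_ && _).
move=> i j; rewrite mulmx_diag mxtrace_diag (bigD1 j) //= big1 => [|k /negbTE kj].
  by rewrite !mxE !eqxx mulr1 addr0.
by rewrite !mxE kj mulr0.
Qed.


Lemma trace_mul r (X Y : 'M[R]_r) : \tr (X *m Y) = \sum_i \sum_j X i j * Y j i.
Proof. by rewrite /mxtrace; apply: eq_bigr => i _; rewrite mxE. Qed.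

Lemma dot_col r (A B : 'M[R]_r) i j : A^T = A ->
  ((col i A)^T *m col j B) 0 0 = (A *m B) i j.
Proof. by rewrite tr_col => ->; rewrite !mxE; apply: eq_bigr => k _; rewrite !mxE. Qed.

Lemma dotDZ r (u v w : 'cV[R]_r) a b :
  (u^T *m (a *: v + b *: w)) 0 0 = a * (u^T *m v) 0 0 + b * (u^T *m w) 0 0.
Proof. by rewrite mulmxDr -!scalemxAr !mxE. Qed.

Lemma ord7_ge5 (l : 'I_7) : ~~ (l < 5)%N -> l = i5 \/ l = i6.
Proof.
case: l => [[|[|[|[|[|[|[|?]]]]]]] ?] //= _; [left|right]; exact: val_inj.
Qed.

Lemma contra_eq : (1 - p) * (p / 3) = p * (1 - p / 3) -> False.
Proof.
have hp0 := p0 => e.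
have : (1 - p) * (p / 3) - p * (1 - p / 3) = 0 by rewrite e subrr.
have -> : (1 - p) * (p / 3) - p * (1 - p / 3) = - (p * 2 / 3) by field.
move/eqP; rewrite oppr_eq0 => /eqP h.
have : p * 2 / 3 > 0 by rewrite divr_gt0 // mulr_gt0.
by rewrite h ltxx.
Qed.


Lemma lower r (Rs : 'I_7 -> 'M[R]_r) (Cs : 'I_7 -> 'M[R]_r) :
  (forall i, psd (Rs i)) -> (forall j, psd (Cs j)) ->
  (forall i j, M7 p i j = \tr (Rs i *m Cs j)) -> (7 <= r)%N.
Proof.
move=> pR pC hM.
have sR k : (Rs k)^T = Rs k by case: (pR k).
have sC k : (Cs k)^T = Cs k by case: (pC k).
have Z a b : M7 p a b = 0 -> Rs a *m Cs b = 0.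
  by move=> h; have [_] := psd_tr (pR a) (pC b); apply; rewrite -hM.
have nz k : exists ij : 'I_r * 'I_r, (Rs k *m Cs k) ij.1 ij.2 != 0.
  case: (pickP (fun ij : 'I_r * 'I_r => (Rs k *m Cs k) ij.1 ij.2 != 0)) => [ij h|h].
    by exists ij.
  have := M7_diag k; rewrite hM.
  have -> : Rs k *m Cs k = 0.
    by apply/matrixP => i j; rewrite [RHS]mxE; have := h (i, j) => /= /negbFE /eqP.
  by rewrite linear0 eqxx.
have [f hf] := fin_all_exists nz.
pose idx (b : bool) := if b then i6 else i5.
pose P a b := Rs (idx a) *m Cs (idx b).
have minor : exists a a' b b' (i i' j j' : 'I_r),
    P a b i j * P a' b' i' j' - P a b' i j' * P a' b i' j != 0.
  apply: NNPP => hn.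
  have H a a' b b' i i' j j' : P a b i j * P a' b' i' j' = P a b' i j' * P a' b i' j.
    apply/eqP; rewrite -subr_eq0; apply/negPn/negP => hne.
    by apply: hn; exists a, a', b, b', i, i', j, j'.
  have e1 : \tr (P false false *m P true true) = \tr (P false true) * \tr (P true false).
    rewrite trace_mul /mxtrace mulr_suml; apply: eq_bigr => i _.
    rewrite mulr_sumr; apply: eq_bigr => j _; exact: H.
  have e2 : \tr (P false true *m P true false) = \tr (P false false) * \tr (P true true).
    rewrite trace_mul /mxtrace mulr_suml; apply: eq_bigr => i _.
    rewrite mulr_sumr; apply: eq_bigr => j _; exact: H.
  have e3 : \tr (P false false *m P true true) = \tr (P false true *m P true false).
    rewrite /P /= -mxtrace_tr !trmx_mul !sR !sC !mulmxA mxtrace_mulC !mulmxA.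
    done.
  have e := etrans (esym e1) (etrans e3 e2).
  rewrite /P -!hM /= M7_55 M7_56 M7_65 M7_66 in e.
  exact: contra_eq e.
case: minor => a [a' [b [b' [i [i' [j [j' hD]]]]]]].
pose ra (k : 'I_7) := if (k < 5)%N then k else if k == i5 then idx a else idx a'.
pose cb (l : 'I_7) := if (l < 5)%N then l else if l == i5 then idx b else idx b'.
pose ri (k : 'I_7) := if (k < 5)%N then (f k).1 else if k == i5 then i else i'.
pose cj (l : 'I_7) := if (l < 5)%N then (f l).2 else if l == i5 then j else j'.
pose x k := col (ri k) (Rs (ra k)).
pose y l := col (cj l) (Cs (cb l)).
pose G k l := (Rs (ra k) *m Cs (cb l)) (ri k) (cj l).
have xy (k l : 'I_7) : ((x k)^T *m y l) 0 0 = G k l by apply: dot_col.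
have raE (k : 'I_7) : (k < 5)%N -> ra k = k by rewrite /ra => ->.
have cbE (k : 'I_7) : (k < 5)%N -> cb k = k by rewrite /cb => ->.
have ra5 (k : 'I_7) : ~~ (k < 5)%N -> ~~ (ra k < 5)%N.
  by move=> h; rewrite /ra (negbTE h); case: (k == i5); case: (a); case: (a').
have cb5 (k : 'I_7) : ~~ (k < 5)%N -> ~~ (cb k < 5)%N.
  by move=> h; rewrite /cb (negbTE h); case: (k == i5); case: (b); case: (b').
have Goff (k l : 'I_7) : ((k < 5) || (l < 5))%N -> k != l -> G k l = 0.
  move=> hkl hne; rewrite /G Z; first by rewrite mxE.
  case hk: (k < 5)%N.
    rewrite raE //; case hl: (l < 5)%N.
      by rewrite cbE // M7_off ?hk.
    apply: M7_off; first by rewrite hk.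
    by apply/eqP => e; have := cb5 l (negbT hl); rewrite -e hk.
  rewrite hk /= in hkl; rewrite cbE //; apply: M7_off; first by rewrite hkl orbT.
  by apply/eqP => e; have := ra5 k (negbT hk); rewrite e hkl.
have Gdiag (k : 'I_7) : (k < 5)%N -> G k k != 0.
  by move=> hk; rewrite /G /ri /cj raE // cbE // hk; apply: hf.
have G55 : G i5 i5 = P a b i j by [].
have G56 : G i5 i6 = P a b' i j' by [].
have G65 : G i6 i5 = P a' b i' j by [].
have G66 : G i6 i6 = P a' b' i' j' by [].
pose D := G i5 i5 * G i6 i6 - G i5 i6 * G i6 i5.
have hD0 : D != 0 by rewrite /D G55 G56 G65 G66.
pose y' (l : 'I_7) := if (l < 5)%N then (G l l)^-1 *: y l
  else if l == i5 then (G i6 i6 / D) *: y i5 + (- G i6 i5 / D) *: y i6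
  else (- G i5 i6 / D) *: y i5 + (G i5 i5 / D) *: y i6.
have lt5 (k : 'I_7) : (k < 5)%N -> (k != i5) && (k != i6).
  by case: k => [[|[|[|[|[|[|[|?]]]]]]] ?].
have dotE (k l : 'I_7) : ((x k)^T *m y' l) 0 0 = (k == l)%:R.
  rewrite /y'; case hl: (l < 5)%N.
    rewrite -scalemxAr mxE xy; case: (eqVneq k l) => [->|hkl].
      by rewrite mulVf ?Gdiag.
    by rewrite (Goff k l) ?hl ?orbT // mulr0.
  have [-> | ->] := ord7_ge5 (negbT hl); rewrite /= dotDZ !xy.
    case hk: (k < 5)%N.
      have /andP [n5 n6] := lt5 k hk.
      have z5 : G k i5 = 0 by apply: Goff; rewrite ?hk.
      have z6 : G k i6 = 0 by apply: Goff; rewrite ?hk.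
      by rewrite z5 z6 !mulr0 addr0 (negbTE n5).
    have [-> | ->] := ord7_ge5 (negbT hk); rewrite /= /D; field; exact: hD0.
  case hk: (k < 5)%N.
    have /andP [n5 n6] := lt5 k hk.
    have z5 : G k i5 = 0 by apply: Goff; rewrite ?hk.
    have z6 : G k i6 = 0 by apply: Goff; rewrite ?hk.
    by rewrite z5 z6 !mulr0 addr0 (negbTE n6).
  have [-> | ->] := ord7_ge5 (negbT hk); rewrite /= /D; field; exact: hD0.
pose X := \matrix_(ii < r, k < 7) x k ii 0.
pose Y := \matrix_(ii < r, l < 7) y' l ii 0.
have XY : X^T *m Y = 1%:M.
  apply/matrixP => k l; rewrite [RHS]mxE -dotE !mxE; apply: eq_bigr => ii _.
  by rewrite !mxE.
have := mxrankM_maxl X^T Y; rewrite XY mxrank1 => h.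
exact: leq_trans h (rank_leq_col _).
Qed.

End Main.

Theorem lemma4 (R : realType) (p : R) :
  0 < p -> p <= 1 -> psd_rank (M7 p) 7.
Proof.
move=> p0 p1; split; first exact: upper.
move=> r' [Rs [Cs [hR [hC hM]]]].
exact: (lower p0 p1 hR hC hM).
Qed.
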